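(* Consider the $N$-layer cascade of the context and let $2\le n\le N$. Let $\mathcal{M}=\prod_{j=1}^M z_j$ be a monomial appearing in $s_{n-1,L_{n-1}}^{(\ell_0)}$ for some $\ell_0\ge1$ and in no derivative $s_{n-1,L_{n-1}}^{(\ell)}$ with $1\le\ell<\ell_0$, with coefficient $C_{\mathcal{M}}$ in $s_{n-1,L_{n-1}}^{(\ell_0)}$, and such that every $Z_j$ belongs to $\mathscr{S}^{(k)}$ or $\mathscr{S}^{(N+k)}$ for some $1\le k\le n-1$, or to $\mathscr{S}^{(2N+1)}$. Assume: $\mathcal{M}$ is square-free and does not involve two disjoint pairs of variables corresponding to species that react together; and if $s_{n-1,L_{n-1}}$ divides $\mathcal{M}$, then for all $j_1,j_2$ such that $Z_{j_1}$ and $Z_{j_2}$ react together, $Z_{j_1}=S_{n-1,L_{n-1}}$ or $Z_{j_2}=S_{n-1,L_{n-1}}$. Then $\widehat{\mathcal{M}}:=s_{n,L_n-1}\mathcal{M}$ appears in $s_{n,L_n}^{(\ell_0+2)}$ and in no derivative $s_{n,L_n}^{(\ell)}$ with $1\le\ell<\ell_0+2$, and its coefficient in $s_{n,L_n}^{(\ell_0+2)}$ is $c_{n,L_n}a_{n,L_n}C_{\mathcal{M}}$.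
   Context: Species are capital letters, concentrations lower-case letters. Mass-action system: $\dot{\mathbf{x}}=\sum_{y\to y'}k_{yy'}\mathbf{x}^y(y'-y)$. Total derivative: $\dot\varphi=\sum_i\frac{\partial\varphi}{\partial x_i}\dot x_i$ with $\dot x_i$ replaced by the right-hand side; $\varphi^{(\ell)}$ the $\ell$-th iterate, a polynomial in concentrations with coefficients polynomial in the rate constants; a monomial appears if its coefficient is nonzero. A non-intermediate $X_1$ reacts with a non-intermediate $X_2$ if there is a reaction $X_1+X_2\to W$ with $W$ intermediate. Cascade: $N\ge1$, $L_1,\dots,L_N\ge1$. Non-intermediate species $E$, pairwise distinct $F_1,\dots,F_N$, and $S_{m,j}$ ($1\le m\le N$, $0\le j\le L_m$), all distinct; intermediates $U_{m,j},V_{m,j}$ ($1\le j\le L_m$), all distinct. $S_{0,L_0}:=E$. For each $m$, $1\le j\le L_m$: $S_{m-1,L_{m-1}}+S_{m,j-1}\to U_{m,j}$ (rate $a_{m,j}$), $U_{m,j}\to S_{m-1,L_{m-1}}+S_{m,j-1}$ ($b_{m,j}$), $U_{m,j}\to S_{m-1,L_{m-1}}+S_{m,j}$ ($c_{m,j}$), $F_m+S_{m,j}\to V_{m,j}$ ($\tilde a_{m,j}$), $V_{m,j}\to F_m+S_{m,j}$ ($\tilde b_{m,j}$), $V_{m,j}\to F_m+S_{m,j-1}$ ($\tilde c_{m,j}$). Partition of non-intermediates: $\mathscr{S}^{(m)}=\{S_{m,0},\dots,S_{m,L_m}\}$, $\mathscr{S}^{(N+m)}=\{F_m\}$ ($1\le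 m\le N$), $\mathscr{S}^{(2N+1)}=\{E\}$. *)

(* Defs.v *)
From HB Require Import structures.
From mathcomp Require Import all_boot all_order all_algebra.
Set Implicit Arguments.
Unset Strict Implicit.
Unset Printing Implicit Defensive.
Import GRing.Theory Num.Theory.

(* Esp = E, Fsp m = F_m, Ssp m j = S_{m,j}, Usp m j = U_{m,j}, Vsp m j = V_{m,j}.
   Distinct constructors/arguments give distinct species, as in the paper. *)
Inductive species := Esp | Fsp of nat | Ssp of nat & nat | Usp of nat & nat | Vsp of nat & nat.

Definition species_enc (s : species) : nat * nat * nat :=
  match s with
  | Esp => (0, 0, 0) | Fsp m => (1, m, 0) | Ssp m j => (2, m, j)
  | Usp m j => (3, m, j) | Vsp m j => (4, m, j) end.
Definition species_dec (t : nat * nat * nat) : species :=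
  match t with
  | (0, _, _) => Esp | (1, m, _) => Fsp m | (2, m, j) => Ssp m j
  | (3, m, j) => Usp m j | (_, m, j) => Vsp m j end.
Lemma species_encK : cancel species_enc species_dec. Proof. by case. Qed.
HB.instance Definition _ := Countable.copy species (can_type species_encK).

Definition intermediate (s : species) : bool :=
  match s with Usp _ _ | Vsp _ _ => true | _ => false end.

(* rate label (t, m, j): t = 0,1,2,3,4,5 for a, b, c, ~a, ~b, ~c (index m,j) *)
Definition rlabel := (nat * nat * nat)%type.
Definition ra m j : rlabel := (0, m, j).
Definition rb m j : rlabel := (1, m, j).
Definition rc m j : rlabel := (2, m, j).
Definition rat_ m j : rlabel := (3, m, j).
Definition rbt m j : rlabel := (4, m, j).
Definition rct m j : rlabel := (5, m, j).

(* complexes are multisets of species, given as lists *)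
Record reaction := Rxn { rlhs : seq species; rrhs : seq species; rlab : rlabel }.

(* S_{m,L_m}, with the convention S_{0,L_0} := E *)
Definition topS (L : nat -> nat) (m : nat) : species :=
  if m is 0 then Esp else Ssp m (L m).

Definition layer_rxns (L : nat -> nat) (m j : nat) : seq reaction :=
  let X := topS L m.-1 in
  [:: Rxn [:: X; Ssp m j.-1] [:: Usp m j] (ra m j);
      Rxn [:: Usp m j] [:: X; Ssp m j.-1] (rb m j);
      Rxn [:: Usp m j] [:: X; Ssp m j] (rc m j);
      Rxn [:: Fsp m; Ssp m j] [:: Vsp m j] (rat_ m j);
      Rxn [:: Vsp m j] [:: Fsp m; Ssp m j] (rbt m j);
      Rxn [:: Vsp m j] [:: Fsp m; Ssp m j.-1] (rct m j)].

Definition cascade (N : nat) (L : nat -> nat) : seq reaction :=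
  flatten [seq flatten [seq layer_rxns L m j | j <- iota 1 (L m)] | m <- iota 1 N].

(* A term ((c, r), x) stands for  c * (prod of rate constants in r) * (prod of
   concentrations of species in x); a polynomial is a (formal) sum of terms. *)
Definition term := ((int * seq rlabel) * seq species)%type.
Definition poly := seq term.

(* total derivative of one term along the mass-action vector field of net:
   sum_i d/dx_i(term) * sum_{y -> y'} k x^y (y'_i - y_i) *)
Definition deriv_term (net : seq reaction) (t : term) : poly :=
  let: ((c, r), x) := t in
  flatten [seq [seq (((c * Posz (count_mem i x)
                       * (Posz (count_mem i (rrhs rx)) - Posz (count_mem i (rlhs rx))))%R,
                      rlab rx :: r),
                     rlhs rx ++ rem i x) | rx <- net] | i <- undup x].

Definition deriv (net : seq reaction) (P : poly) : poly :=
  flatten [seq deriv_term net t | t <- P].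

Definition iter_deriv (net : seq reaction) (ell : nat) (s : species) : poly :=
  iter ell (deriv net) [:: ((Posz 1, [::]), [:: s])].

Definition rpoly := seq (int * seq rlabel).
Definition rcoef (p : rpoly) (r : seq rlabel) : int :=
  (\sum_(t <- p | perm_eq t.2 r) t.1)%R.
Definition rpoly_eq (p q : rpoly) : Prop := forall r, rcoef p r = rcoef q r.
Definition rmul_mon (u : seq rlabel) (p : rpoly) : rpoly :=
  [seq (t.1, u ++ t.2) | t <- p].

Definition coef_of (P : poly) (M : seq species) : rpoly :=
  [seq t.1 | t <- P & perm_eq t.2 M].

Definition appears (P : poly) (M : seq species) : Prop :=
  exists r, rcoef (coef_of P M) r != 0.

Definition reacts (net : seq reaction) (X Y : species) : bool :=
  [&& ~~ intermediate X, ~~ intermediate Y &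
   has (fun rx => perm_eq (rlhs rx) [:: X; Y] &&
                  (if rrhs rx is [:: W] then intermediate W else false)) net].

(* Main.v *)
Require Import Defs.
From HB Require Import structures.
From mathcomp Require Import all_boot all_order all_algebra.
From mathcomp Require Import zify.
Set Implicit Arguments.
Unset Strict Implicit.
Unset Printing Implicit Defensive.
Import GRing.Theory Num.Theory.

Definition rx_enc (r : reaction) := (rlhs r, rrhs r, rlab r).
Definition rx_dec (t : seq species * seq species * rlabel) := Rxn t.1.1 t.1.2 t.2.
Lemma rx_encK : cancel rx_enc rx_dec. Proof. by case. Qed.
HB.instance Definition _ := Countable.copy reaction (can_type rx_encK).

Definition pc (P : Defs.poly) (T : seq species) (r : seq rlabel) : int :=
  (\sum_(t <- P | perm_eq t.2 T && perm_eq t.1.2 r) t.1.1)%R.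

Lemma rcoef_coef P T r : rcoef (coef_of P T) r = pc P T r.
Proof. by rewrite /rcoef /coef_of big_map big_filter_cond. Qed.

Lemma pc_cat P Q T r : pc (P ++ Q) T r = (pc P T r + pc Q T r)%R.
Proof. by rewrite /pc big_cat. Qed.

Section Gen.
Variable net : seq reaction.
Notation D := (Defs.deriv net).

Lemma deriv_cat P Q : D (P ++ Q) = D P ++ D Q.
Proof. by rewrite /Defs.deriv map_cat flatten_cat. Qed.

Lemma iterD_cat k P Q : iter k D (P ++ Q) = iter k D P ++ iter k D Q.
Proof. elim: k => //= k ->; exact: deriv_cat. Qed.

Lemma pc_iter_sum k P T r :
  pc (iter k D P) T r = (\sum_(t <- P) pc (iter k D [:: t]) T r)%R.
Proof.
elim: P => [|t P IH].
  have -> : iter k D [::] = [::] by elim: k => //= k ->.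
  by rewrite big_nil /pc big_nil.
by rewrite big_cons -cat1s iterD_cat pc_cat IH.
Qed.

Lemma deriv1 t : D [:: t] = deriv_term net t.
Proof. by rewrite /Defs.deriv /= cats0. Qed.

Lemma iter_deriv1 k t : iter k.+1 D [:: t] = iter k D (deriv_term net t).
Proof. by rewrite iterSr deriv1. Qed.

Lemma mem_deriv t P : t \in D P -> exists c r x i rx,
  [/\ ((c, r), x) \in P, i \in x, rx \in net &
   t = (((c * Posz (count_mem i x)
        * (Posz (count_mem i (rrhs rx)) - Posz (count_mem i (rlhs rx))))%R,
        rlab rx :: r), rlhs rx ++ rem i x)].
Proof.
case/flattenP=> s /mapP [[[c r] x] Hin ->] /flattenP [s' /mapP [i Hi ->]] /mapP [rx Hrx ->].
exists c, r, x, i, rx; split => //; by rewrite mem_undup in Hi.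
Qed.

Section R.
Variable Phi : seq species -> Prop.
Variable T : seq species.
Hypothesis PhiT : forall z, Phi z -> ~~ perm_eq z T.
Hypothesis Phi_step : forall x i rx, Phi x -> i \in x -> rx \in net ->
  count_mem i (rrhs rx) != count_mem i (rlhs rx) -> Phi (rlhs rx ++ rem i x).

Definition invt (P : Defs.poly) := forall t, t \in P -> t.1.1 = 0%R \/ Phi t.2.

Lemma invt_deriv P : invt P -> invt (D P).
Proof.
move=> HP t /mem_deriv [c [r [x [i [rx [Hin Hi Hrx ->]]]]]] /=.
case: (HP _ Hin) => /= [-> | Hx]; first by left; rewrite !mul0r.
have [E|E] := eqVneq (count_mem i (rrhs rx)) (count_mem i (rlhs rx)).
  by left; rewrite E subrr mulr0.
by right; apply: Phi_step.
Qed.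

Lemma Rgen k P r : invt P -> pc (iter k D P) T r = 0%R.
Proof.
move=> HP; have: invt (iter k D P).
  by elim: k => //= k IH; apply: invt_deriv.
move=> H; rewrite /pc big_seq_cond big1 // => t /andP [Ht /andP [Hp _]].
case: (H _ Ht) => // Hx; by move: (PhiT Hx); rewrite Hp.
Qed.
End R.

Definition shiftp (c : int) (rho : seq rlabel) (P : Defs.poly) : Defs.poly :=
  [seq (((c * t.1.1)%R, t.1.2 ++ rho), t.2) | t <- P].

Lemma deriv_shift c rho P : D (shiftp c rho P) = shiftp c rho (D P).
Proof.
rewrite /Defs.deriv /shiftp map_flatten -map_comp; congr flatten.
rewrite -[in RHS]map_comp.
apply: eq_map => [[[c' r] x]] /=.
rewrite /deriv_term map_flatten -!map_comp; congr flatten; apply: eq_map => i /=.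
rewrite -map_comp; apply: eq_map => rx /=. by rewrite !mulrA.
Qed.

Lemma iter_shift k c rho P : iter k D (shiftp c rho P) = shiftp c rho (iter k D P).
Proof. elim: k => //= k ->; exact: deriv_shift. Qed.

Definition SS (P : Defs.poly) T rho r : int :=
  (\sum_(t <- P | perm_eq t.2 T && perm_eq (t.1.2 ++ rho) r) t.1.1)%R.

Lemma pc_shift c rho P T r : pc (shiftp c rho P) T r = (c * SS P T rho r)%R.
Proof. by rewrite /pc /shiftp big_map mulr_sumr. Qed.

Lemma single_shift k c rho x T r :
  pc (iter k D [:: ((c, rho), x)]) T r = (c * SS (iter k D [:: ((1%R, [::]), x)]) T rho r)%R.
Proof.
have -> : [:: ((c, rho), x)] = shiftp c rho [:: ((1%R, [::]), x)] by rewrite /shiftp /= mulr1.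
by rewrite iter_shift pc_shift.
Qed.

Lemma SS0 P T rho r : (forall r', pc P T r' = 0%R) -> SS P T rho r = 0%R.
Proof.
move=> H.
case: (boolP (has (fun t : term => perm_eq (t.1.2 ++ rho) r) P)) => [/hasP [t0 _ Ht0] | /hasPn Hn].
  rewrite -(H t0.1.2) /SS /pc; apply: eq_bigl => t; congr andb.
  apply/idP/idP => Hp.
    by rewrite -(perm_cat2r rho) (perm_trans Hp) // perm_sym.
  by apply: perm_trans Ht0; rewrite perm_cat2r.
rewrite /SS big_seq_cond big1 // => t /andP [Ht /andP [_ Hp]].
by move: (Hn _ Ht); rewrite Hp.
Qed.

End Gen.

Definition layer (s : species) : nat :=
  match s with Esp => 0 | Fsp m => m | Ssp m _ => m | Usp m _ => m | Vsp m _ => m end.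
Definition isFV (p : nat) (s : species) : bool :=
  match s with Fsp m => m == p | Vsp m _ => m == p | _ => false end.

Lemma changed (rx : reaction) i :
  count_mem i (rrhs rx) != count_mem i (rlhs rx) -> i \in rlhs rx ++ rrhs rx.
Proof.
apply: contraR; rewrite mem_cat negb_or => /andP [h1 h2].
by rewrite !(count_memPn _) .
Qed.

Lemma perm2 (T : eqType) (a b c d : T) : perm_eq [:: a; b] [:: c; d] ->
  (a = c /\ b = d) \/ (a = d /\ b = c).
Proof.
move=> H; have: a \in [:: c; d] by rewrite -(perm_mem H) inE eqxx.
rewrite !inE => /orP [/eqP Ea | /eqP Ea].
  subst a; move: H; rewrite perm_cons => /perm_mem H.
  by left; split => //; move: (H b); rewrite !inE eqxx => /esym /eqP.
subst a; have: perm_eq [:: d; b] [:: d; c].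
  by apply: (perm_trans H); rewrite (perm_catC [:: c] [:: d]).
rewrite perm_cons => /perm_mem H2.
by right; split => //; move: (H2 b); rewrite !inE eqxx => /esym /eqP.
Qed.

Section Casc.
Variables (N : nat) (L : nat -> nat) (n : nat).
Hypothesis hL : forall m, 1 <= m <= N -> 1 <= L m.
Hypothesis hn : 2 <= n <= N.
Notation net := (cascade N L).

Lemma memcasc rx : rx \in net -> exists m j,
  [/\ 0 < m <= N, 0 < j <= L m & rx \in layer_rxns L m j].
Proof.
case/flattenP => s /mapP [m Hm ->] /flattenP [s' /mapP [j Hj ->]] Hrx.
exists m, j; move: Hm Hj; rewrite !mem_iota => /andP [? ?] /andP [? ?].
split => //; apply/andP; split; lia.
Qed.

Lemma layer_cases m j rx (P : reaction -> Prop) : rx \in layer_rxns L m j ->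
  P (Rxn [:: topS L m.-1; Ssp m j.-1] [:: Usp m j] (ra m j)) ->
  P (Rxn [:: Usp m j] [:: topS L m.-1; Ssp m j.-1] (rb m j)) ->
  P (Rxn [:: Usp m j] [:: topS L m.-1; Ssp m j] (rc m j)) ->
  P (Rxn [:: Fsp m; Ssp m j] [:: Vsp m j] (rat_ m j)) ->
  P (Rxn [:: Vsp m j] [:: Fsp m; Ssp m j] (rbt m j)) ->
  P (Rxn [:: Vsp m j] [:: Fsp m; Ssp m j.-1] (rct m j)) -> P rx.
Proof.
rewrite /layer_rxns !inE => H p1 p2 p3 p4 p5 p6.
by do ![case/orP: H => [/eqP -> //|H]]; move/eqP: H => ->.
Qed.

Lemma topS_int k : intermediate (topS L k) = false. Proof. by case: k. Qed.
Lemma layer_topS k : layer (topS L k) = k. Proof. by case: k. Qed.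
Lemma isFV_topS p k : isFV p (topS L k) = false. Proof. by case: k. Qed.

Lemma step_layer rx i : rx \in net -> count_mem i (rrhs rx) != count_mem i (rlhs rx) ->
  exists2 s0, s0 \in rlhs rx & layer i <= layer s0.
Proof.
case/memcasc => m [j [Hm Hj Hin]] /changed.
pattern rx; refine (layer_cases Hin _ _ _ _ _ _) => /=; rewrite !inE;
  do ?[case/orP] => /eqP ->; 
  first [ by exists (Ssp m j.-1); rewrite ?inE ?eqxx ?orbT //= ?layer_topS; lia
        | by exists (Usp m j); rewrite ?inE ?eqxx ?orbT //= ?layer_topS; lia
        | by exists (Fsp m); rewrite ?inE ?eqxx ?orbT //= ?layer_topS; lia
        | by exists (Vsp m j); rewrite ?inE ?eqxx ?orbT //= ?layer_topS; lia ].
Qed.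

Lemma step_FV p rx i : rx \in net -> count_mem i (rrhs rx) != count_mem i (rlhs rx) ->
  isFV p i -> has (isFV p) (rlhs rx).
Proof.
case/memcasc => m [j [Hm Hj Hin]] /changed.
pattern rx; refine (layer_cases Hin _ _ _ _ _ _) => /=; rewrite !inE;
  do ?[case/orP] => /eqP -> //=; rewrite ?isFV_topS // => ->; by rewrite ?orbT.
Qed.

Lemma eq_enc (x y : species) : (x == y) = (species_enc x == species_enc y).
Proof. by apply/eqP/eqP => [->//|/(can_inj species_encK)]. Qed.

Notation X := (Ssp n.-1 (L n.-1)).
Notation S' := (Ssp n (L n).-1).
Notation U := (Usp n (L n)).
Notation s := (Ssp n (L n)).

Lemma topSX : topS L n.-1 = X.
Proof. by case: n hn => [|[|k]]. Qed.

Lemma Ln_pos : 0 < L n.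
Proof. apply: hL; lia. Qed.

Definition item (w : seq species) : Prop :=
  (exists W, w = [:: W] /\ intermediate W) \/ w = [:: X] \/
  (exists A B, w = [:: A; B] /\ reacts net A B).

Lemma lhs_item rx : rx \in net -> item (rlhs rx).
Proof.
move=> Hrx; have := Hrx; case/memcasc => m [j [Hm Hj Hin]]; move: Hrx.
pattern rx; refine (layer_cases Hin _ _ _ _ _ _) => /= Hrx.
- right; right; do 2 eexists; split; first reflexivity.
  rewrite /reacts ?topS_int /=; apply/hasP; eexists; first exact: Hrx; by rewrite /= perm_refl.
- by left; eexists; split.
- by left; eexists; split.
- right; right; do 2 eexists; split; first reflexivity.
  rewrite /reacts ?topS_int /=; apply/hasP; eexists; first exact: Hrx; by rewrite /= perm_refl.
- by left; eexists; split.
- by left; eexists; split.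
Qed.

Lemma labU rx : rx \in net -> rlab rx = ra n (L n) ->
  rlhs rx = [:: X; S'] /\ rrhs rx = [:: U].
Proof.
case/memcasc => m [j [Hm Hj Hin]].
pattern rx; refine (layer_cases Hin _ _ _ _ _ _) => //= [[-> ->]].
by rewrite topSX.
Qed.

Lemma labs rx : rx \in net -> rlab rx = rc n (L n) ->
  rlhs rx = [:: U] /\ rrhs rx = [:: X; s].
Proof.
case/memcasc => m [j [Hm Hj Hin]].
pattern rx; refine (layer_cases Hin _ _ _ _ _ _) => //= [[-> ->]].
by rewrite topSX.
Qed.

Lemma Uchg rx : rx \in net -> count_mem U (rrhs rx) != count_mem U (rlhs rx) ->
  rlab rx != ra n (L n) -> rlhs rx = [:: U].
Proof.
case/memcasc => m [j [Hm Hj Hin]] /changed.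
pattern rx; refine (layer_cases Hin _ _ _ _ _ _) => /=;
case Ek: (m.-1) => [|k] /=; rewrite !inE !eq_enc ?xpair_eqE /=.
all: try (case/orP); try (case/andP => /eqP <- /eqP <-); rewrite ?eqxx //.
Qed.

Definition dead (s0 : species) := (n < layer s0) || isFV n s0.

Lemma schg rx : rx \in net -> count_mem s (rrhs rx) != count_mem s (rlhs rx) ->
  rlab rx != rc n (L n) -> has dead (rlhs rx).
Proof.
case/memcasc => m [j [Hm Hj Hin]] /changed.
pattern rx; refine (layer_cases Hin _ _ _ _ _ _) => /=;
case Ek: (m.-1) => [|k] /=; rewrite !inE !eq_enc ?xpair_eqE /=.
all: try (case/orP); try (case/andP => /eqP ? /eqP ?); subst; rewrite /dead /= ?eqxx ?orbT //.
all: move=> H; rewrite ?orbF; try lia.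
all: match goal with H : is_true ((?a && ?b) == true) |- _ => move/eqP: H => /andP [/eqP ? /eqP ?] end; subst; lia.
Qed.

Lemma reacts_sym A B : reacts net A B = reacts net B A.
Proof.
rewrite /reacts andbCA; congr andb; congr andb; apply: eq_has => rx.
have H : perm_eq [:: A; B] [:: B; A] by rewrite (perm_catC [:: A] [:: B]).
by rewrite (permPr H).
Qed.

Lemma reactsS' B : reacts net S' B -> B = X \/ B = Fsp n.
Proof.
case/and3P => _ _ /hasP [rx Hrx /andP []].
case/memcasc: Hrx => m [j [Hm Hj Hin]].
pattern rx; refine (layer_cases Hin _ _ _ _ _ _) => //= /perm2 [[E1 E2]|[E1 E2]] _.
- move: E1; case Ek: m.-1 => [|k] //= [E1 E3].
  rewrite E1 in E3; have := Ln_pos; lia.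
- by case: E2 => ? _; subst m; left; rewrite -E1 topSX.
- by [].
- by case: E2 => ? _; subst m; right.
Qed.

Lemma count_casc (P : pred reaction) :
  (forall m j, count P (layer_rxns L m j) = ((m == n) && (j == L n)) :> nat) ->
  count P net = 1%N.
Proof.
move=> H; rewrite /cascade count_flatten -map_comp.
have E : forall m, m \in iota 1 N ->
  (count P \o (fun m => flatten [seq layer_rxns L m j | j <- iota 1 (L m)])) m = (m == n) :> nat.
  move=> m _ /=; rewrite count_flatten -map_comp.
  rewrite (eq_map (g := fun j => nat_of_bool ((m == n) && (j == L n)))); last by move=> j; exact: H.
  rewrite sumn_count; case: (eqVneq m n) => [->|Hmn] /=.
    rewrite (@eq_count _ _ (pred1 (L n))) // count_uniq_mem ?iota_uniq // mem_iota.
    by have h := Ln_pos; rewrite h add1n ltnSn.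
  by elim: (iota 1 (L m)).
move/eq_in_map: E => ->; rewrite (sumn_count (fun m => m == n)).
rewrite count_uniq_mem ?iota_uniq // mem_iota; apply/eqP; rewrite eqb1; apply/andP; split; lia.
Qed.

Lemma count_ra : count (fun rx => rlab rx == ra n (L n)) net = 1%N.
Proof. by apply: count_casc => m j; rewrite /= ?xpair_eqE /= ?addn0. Qed.
Lemma count_rc : count (fun rx => rlab rx == rc n (L n)) net = 1%N.
Proof. by apply: count_casc => m j; rewrite /= ?xpair_eqE /= ?addn0. Qed.

Definition Kp (s0 : species) := n <= layer s0.

Section WithM.
Variables (M : seq species) (ell0 : nat).
Hypothesis hell0 : 1 <= ell0.
Hypothesis happ : appears (iter_deriv net ell0 X) M.
Hypothesis hfirst : forall ell, 1 <= ell < ell0 -> ~ appears (iter_deriv net ell X) M.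
Hypothesis hspec : forall Z, Z \in M ->
     (exists k, [/\ 1 <= k <= n.-1 &
        (exists2 j, j <= L k & Z = Ssp k j) \/ Z = Fsp k]) \/ Z = Esp.
Hypothesis hsqfree : uniq M.
Hypothesis hdisj : ~ (exists A B C D, [/\ [/\ A \in M, B \in M, C \in M & D \in M],
              uniq [:: A; B; C; D], reacts net A B & reacts net C D]).
Hypothesis hdiv : X \in M -> forall Z1 Z2, Z1 \in M -> Z2 \in M -> reacts net Z1 Z2 ->
       Z1 = X \/ Z2 = X.

Lemma Mspec Z : Z \in M -> ~~ intermediate Z /\ layer Z < n.
Proof.
case/hspec => [[k [Hk [[j _ ->]| ->]]]|->] /=; split => //; lia.
Qed.

Lemma S'notM : S' \notin M.
Proof. by apply/negP => /Mspec [_] /=; rewrite ltnn. Qed.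

Lemma XnS' : X != S'.
Proof. by rewrite eq_enc /= !xpair_eqE /=; apply/negP => /andP [/eqP]; lia. Qed.

Definition Item z := exists w rest, item w /\ perm_eq z (w ++ rest).
Definition Psi z := exists w1 w2 rest, [/\ item w1, item w2 & perm_eq z (w1 ++ w2 ++ rest)].

Lemma cnt_rem (T : eqType) (i : T) s (p : pred T) : i \in s -> count p s = (p i + count p (rem i s))%N.
Proof. by move/perm_to_rem/permP => /(_ p) ->. Qed.

Lemma Psi_step x i rx : Psi x -> i \in x -> rx \in net -> Psi (rlhs rx ++ rem i x).
Proof.
case=> w1 [w2 [rest [h1 h2 hp]]] Hi Hrx; have Hl := lhs_item Hrx.
have := Hi; rewrite (perm_mem hp) !mem_cat => /orP [Hw|/orP [Hw|Hw]].
- exists (rlhs rx), w2, (rem i w1 ++ rest); split => //.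
  apply/permP => p; have e1 := cnt_rem p Hi; have e2 := cnt_rem p Hw.
  move/permP: hp => /(_ p); rewrite !count_cat => e3; rewrite ?count_cat; lia.
- exists w1, (rlhs rx), (rem i w2 ++ rest); split => //.
  apply/permP => p; have e1 := cnt_rem p Hi; have e2 := cnt_rem p Hw.
  move/permP: hp => /(_ p); rewrite !count_cat => e3; rewrite ?count_cat; lia.
- exists w1, w2, (rlhs rx ++ rem i rest); split => //.
  apply/permP => p; have e1 := cnt_rem p Hi; have e2 := cnt_rem p Hw.
  move/permP: hp => /(_ p); rewrite !count_cat => e3; rewrite ?count_cat; lia.
Qed.

Lemma pairM w : item w -> X \notin w -> {subset w <= S' :: M} ->
  exists A B, [/\ w = [:: A; B], A \in M, B \in M & reacts net A B].
Proof.
case => [[W [-> HW]]|[->|[A [B [-> HAB]]]]] HX Hs.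
- have := Hs W; rewrite !inE eqxx => /(_ isT) /orP [/eqP E|/Mspec [] ]; first by rewrite E in HW.
  by rewrite HW.
- by rewrite inE eqxx in HX.
have HA : A \in S' :: M by apply: Hs; rewrite inE eqxx.
have HB : B \in S' :: M by apply: Hs; rewrite !inE eqxx orbT.
move: HX; rewrite !inE negb_or => /andP [XA XB].
have FnM : Fsp n \notin M by apply/negP => /Mspec [_] /=; rewrite ltnn.
case/orP: HA => [/eqP EA|MA].
  subst A; case/reactsS': HAB => EB; first by rewrite EB eqxx in XB.
  by move: HB; rewrite EB inE (negbTE FnM) orbF eq_enc.
case/orP: HB => [/eqP EB|MB].
  subst B; rewrite reacts_sym in HAB; case/reactsS': HAB => EA; first by rewrite EA eqxx in XA.
  by case/negP: FnM; rewrite -EA; exact: MA.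
by exists A, B.
Qed.

Lemma notPsi : ~ Psi (S' :: M).
Proof.
case=> w1 [w2 [rest [h1 h2 hp]]].
have U : uniq (w1 ++ w2 ++ rest) by rewrite -(perm_uniq hp) /= S'notM hsqfree.
have sub : forall w : seq species, {subset w <= w1 ++ w2 ++ rest} -> {subset w <= S' :: M}.
  by move=> w Hw z /Hw; rewrite -(perm_mem hp).
have s1 : {subset w1 <= S' :: M} by apply: sub => z Hz; rewrite mem_cat Hz.
have s2 : {subset w2 <= S' :: M} by apply: sub => z Hz; rewrite !mem_cat Hz orbT.
have XinM : forall w : seq species, {subset w <= S' :: M} -> X \in w -> X \in M.
  by move=> w Hw /Hw; rewrite inE (negbTE XnS').
case: (boolP (X \in w1)) => X1; case: (boolP (X \in w2)) => X2.
- move: U; rewrite cat_uniq => /and3P [_ /hasP []]; exists X => //; by rewrite mem_cat X2.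
- have [A [B [E MA MB HAB]]] := pairM h2 X2 s2.
  by case: (hdiv (XinM _ s1 X1) MA MB HAB) => EX; move: X2; rewrite E !inE EX eqxx ?orbT.
- have [A [B [E MA MB HAB]]] := pairM h1 X1 s1.
  by case: (hdiv (XinM _ s2 X2) MA MB HAB) => EX; move: X1; rewrite E !inE EX eqxx ?orbT.
have [A [B [E1 MA MB HAB]]] := pairM h1 X1 s1.
have [C [D [E2 MC MD HCD]]] := pairM h2 X2 s2.
apply: hdisj; exists A, B, C, D; split => //.
by move: U; rewrite catA cat_uniq E1 E2 => /andP [].
Qed.


Notation D := (Defs.deriv net).

Lemma rem_cat_l (T : eqType) (i : T) x y : i \in x -> rem i (x ++ y) = rem i x ++ y.
Proof.
elim: x => //= a x IH; rewrite inE.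
case: (eqVneq a i) => [E|Hai] //= Hi; by rewrite IH.
Qed.

Lemma rem_cat_r (T : eqType) (i : T) x y : i \notin x -> rem i (x ++ y) = x ++ rem i y.
Proof.
elim: x => //= a x IH; rewrite inE negb_or eq_sym => /andP [Hai Hi].
by rewrite (negbTE Hai) IH.
Qed.

Lemma dt_single c rho y : deriv_term net ((c, rho), [:: y]) =
  [seq (((c * (Posz (count_mem y (rrhs rx)) - Posz (count_mem y (rlhs rx))))%R, rlab rx :: rho),
        rlhs rx) | rx <- net].
Proof.
rewrite /deriv_term /= cats0; apply: eq_map => rx; by rewrite eqxx /= cats0 mulr1.
Qed.

Lemma Kmono x i rx : i \in x -> rx \in net ->
  count_mem i (rrhs rx) != count_mem i (rlhs rx) ->
  count Kp x <= count Kp (rlhs rx ++ rem i x).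
Proof.
move=> Hi Hrx Hc; rewrite count_cat (cnt_rem Kp Hi).
case Ki: (Kp i) => /=; last lia.
have [s0 Hs0 Hl] := step_layer Hrx Hc.
have : 0 < count Kp (rlhs rx).
  by rewrite -has_count; apply/hasP; exists s0 => //; rewrite /Kp; move: Ki; rewrite /Kp; lia.
lia.
Qed.

Lemma dead_step x i rx : has dead x -> i \in x -> rx \in net ->
  count_mem i (rrhs rx) != count_mem i (rlhs rx) -> has dead (rlhs rx ++ rem i x).
Proof.
move=> /hasP [d Hd Dd] Hi Hrx Hc; rewrite has_cat.
case: (eqVneq d i) => [E|Hdi].
  subst d; apply/orP; left; move: Dd; rewrite /dead => /orP [Hl|HF].
    have [s0 Hs0 Hl2] := step_layer Hrx Hc; apply/hasP; exists s0 => //.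
    by rewrite /dead; apply/orP; left; lia.
  have := step_FV Hrx Hc HF; apply: sub_has => z; rewrite /dead => ->; by rewrite orbT.
apply/orP; right; apply/hasP; exists d => //; exact: rem_mem.
Qed.

Lemma countKM : count Kp M = 0%N.
Proof.
apply/eqP; rewrite -leqn0 leqNgt -has_count; apply/hasPn => Z /Mspec [_ h].
by rewrite /Kp -ltnNge.
Qed.

Lemma notdeadM Z : Z \in S' :: M -> ~~ dead Z.
Proof.
rewrite inE => /orP [/eqP ->|/Mspec [Hi Hl]]; first by rewrite /dead /= ltnn.
rewrite /dead negb_or -leqNgt; apply/andP; split; first lia.
by case: Z Hi Hl => //= m _ Hl; apply/negP => /eqP E; lia.
Qed.

Definition appt (t : Defs.term) : Defs.term := (t.1, t.2 ++ [:: S']).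

Lemma deriv_app c rho x : S' \notin x ->
  deriv_term net ((c, rho), x ++ [:: S']) =
  map appt (deriv_term net ((c, rho), x)) ++
  [seq (((c * Posz (count_mem S' (x ++ [:: S']))
        * (Posz (count_mem S' (rrhs rx)) - Posz (count_mem S' (rlhs rx))))%R,
        rlab rx :: rho), rlhs rx ++ rem S' (x ++ [:: S'])) | rx <- net].
Proof.
move=> HS; rewrite /deriv_term undup_cat.
have -> : [seq y <- undup x | y \notin [:: S']] = undup x.
  apply/all_filterP/allP => y; rewrite mem_undup inE => Hy.
  by apply/negP => /eqP E; subst y; rewrite Hy in HS.
rewrite map_cat flatten_cat /= cats0; congr (_ ++ _).
rewrite map_flatten -map_comp; congr flatten; apply/eq_in_map => i; rewrite mem_undup => Hi /=.
rewrite -map_comp; apply: eq_map => rx /=.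
have HiS : i != S' by apply/negP => /eqP E; subst i; rewrite Hi in HS.
rewrite /appt /= count_cat /= eq_sym (negbTE HiS) (rem_cat_l _ Hi) catA /=. by rewrite (addn0 (count_mem i x)).
Qed.

Lemma Item_deriv t t' : t' \in deriv_term net t -> Item t'.2.
Proof.
rewrite -deriv1 => /mem_deriv [c [r [x [i [rx [_ _ Hrx ->]]]]]] /=.
exists (rlhs rx), (rem i x); split; [exact: lhs_item|exact: perm_refl].
Qed.

Lemma PsiP z z' : Psi z -> perm_eq z z' -> Psi z'.
Proof.
case=> w1 [w2 [rest [h1 h2 hp]]] H; exists w1, w2, rest; split => //.
by rewrite -(permPl H).
Qed.

Lemma lemB k (P : Defs.poly) r : (forall t, t \in P -> Item t.2) ->
  pc (iter k D (map appt P)) (S' :: M) r = pc (iter k D P) M r.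
Proof.
elim: k P r => [|k IH] P r HP.
  rewrite /pc /= big_map; apply: eq_bigl => t /=; congr andb.
  have H : perm_eq (t.2 ++ [:: S']) (S' :: t.2) by rewrite perm_catC.
  by rewrite (permPl H) perm_cons.
rewrite pc_iter_sum big_map [RHS]pc_iter_sum; apply: eq_big_seq => [[[c rho] x]] Ht.
have HIx := HP _ Ht; rewrite /appt.
case: (boolP (S' \in x)) => HS.
  rewrite (@Rgen _ (fun z => 1 < count Kp z)); last first.
  - move=> t /=; rewrite inE => /eqP -> /=; right.
    rewrite count_cat /= /Kp leqnn /= -/Kp.
    have : 0 < count Kp x by rewrite -has_count; apply/hasP; exists S' => //; rewrite /Kp /=.
    lia.
  - move=> x' i rx H1 Hi Hrx Hc; have := Kmono Hi Hrx Hc; lia.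
  - move=> z Hz; apply/negP => Hp; move: Hz; rewrite (permP Hp) /= countKM /Kp /= leqnn.
    by [].
  rewrite (@Rgen _ (fun z => 0 < count Kp z)) //; last first.
  - move=> t /=; rewrite inE => /eqP -> /=; right.
    by rewrite -has_count; apply/hasP; exists S' => //; rewrite /Kp /=.
  - move=> x' i rx H1 Hi Hrx Hc; have := Kmono Hi Hrx Hc; lia.
  - by move=> z Hz; apply/negP => Hp; move: Hz; rewrite (permP Hp) countKM.
rewrite !iter_deriv1 deriv_app // iterD_cat pc_cat IH; last by move=> t; apply: Item_deriv.
rewrite (@Rgen _ Psi (S' :: M)) ?addr0 //.
- move=> z Hz; apply/negP => Hp; apply: notPsi; exact: PsiP Hz Hp.
- move=> x' i rx H1 Hi Hrx _; exact: Psi_step.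
- move=> t /mapP [rx Hrx ->] /=; right.
  rewrite rem_cat_r //= eqxx cats0.
  case: HIx => w [rest [hw hp]]; exists (rlhs rx), w, rest; split => //; first exact: lhs_item.
  by rewrite perm_cat2l.
Qed.


Lemma lhs_shape rx : rx \in net ->
  (exists W, rlhs rx = [:: W] /\ intermediate W) \/ size (rlhs rx) = 2%N.
Proof.
case/memcasc => m [j [Hm Hj Hin]].
pattern rx; refine (layer_cases Hin _ _ _ _ _ _) => /=; by [right | left; eexists].
Qed.

Lemma pc_has P T r : pc P T r != 0%R -> has (fun t : Defs.term => perm_eq t.2 T) P.
Proof.
apply: contraR => /hasPn H; rewrite /pc big_seq_cond big1 // => t /andP [Ht /andP [Hp _]].
by move: (H _ Ht); rewrite Hp.
Qed.

Lemma X_notM : ~~ perm_eq [:: X] M.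
Proof.
apply/negP => HXM; case: happ => r0; rewrite rcoef_coef => /pc_has /hasP [t Ht Hp].
move: Ht; rewrite /iter_deriv; case: ell0 hell0 => // k _ /=.
move=> /mem_deriv [c [r [x [i [rx [_ _ Hrx Et]]]]]]; subst t; move: Hp => /= Hp.
have Hp2 : perm_eq (rlhs rx ++ rem i x) [:: X] by apply: (perm_trans Hp); rewrite perm_sym.
case: (lhs_shape Hrx) => [[W [EW HW]]|Hs].
  have : W \in M by rewrite -(perm_mem Hp) mem_cat EW inE eqxx.
  by case/Mspec; rewrite HW.
by move: (perm_size Hp2); rewrite size_cat Hs.
Qed.

Notation Q k := (iter k D [:: ((1%R, [::]), [:: X])]).

Lemma SSQ k rho r : k < ell0 -> SS (Q k) M rho r = 0%R.
Proof.
case: k => [_|k Hk].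
  rewrite /SS big_seq_cond big1 // => t; rewrite inE => /andP [/eqP -> /andP [Hp _]].
  by move: X_notM; rewrite Hp.
apply: SS0 => r'; apply/eqP; apply: contraT => H; exfalso.
apply: (hfirst (ell := k.+1)); first lia.
by exists r'; rewrite rcoef_coef.
Qed.

Lemma Item_X (c : int) (rho : seq rlabel) : forall t : Defs.term, t \in [:: ((c, rho), [:: X])] -> Item t.2.
Proof.
move=> t; rewrite inE => /eqP -> /=; exists [:: X], [::]; split; last by rewrite cats0.
by right; left.
Qed.

Lemma UnX : (U == X) = false. Proof. by rewrite eq_enc. Qed.
Lemma UnS' : (U == S') = false. Proof. by rewrite eq_enc. Qed.
Lemma Xns : (X == s) = false.
Proof. rewrite eq_enc /= !xpair_eqE /=; apply/negP => /andP [/eqP h _]; lia. Qed.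
Lemma snU : (s == U) = false. Proof. by rewrite eq_enc. Qed.

Lemma aterm k c rho r :
  pc (iter k D [:: ((c, rho), [:: X; S'])]) (S' :: M) r = (c * SS (Q k) M rho r)%R.
Proof.
have := @lemB k [:: ((c, rho), [:: X])] r (@Item_X c rho).
rewrite /= /appt /= => ->; exact: single_shift.
Qed.

Lemma U1 k : k <= ell0 -> forall (P : Defs.poly) r,
  (forall t, t \in P -> t.2 = [:: U]) -> pc (iter k D P) (S' :: M) r = 0%R.
Proof.
elim: k => [|k IH] Hk P r HP.
  rewrite /pc big_seq_cond big1 // => t /andP [Ht /andP [Hp _]]; exfalso.
  move: Hp; rewrite (HP _ Ht) => Hp.
  have : U \in S' :: M by rewrite -(perm_mem Hp) inE.
  by rewrite inE UnS' /= => /Mspec [].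
rewrite pc_iter_sum big_seq big1 // => [[[c rho] x]] Ht.
have Ex : x = [:: U] := HP _ Ht; subst x.
rewrite iter_deriv1 dt_single pc_iter_sum big_map big_seq big1 // => rx Hrx.
case Ha: (rlab rx == ra n (L n)).
  have [El Er] := labU Hrx (eqP Ha); rewrite El Er (eqP Ha) aterm SSQ ?mulr0 //; lia.
case: (eqVneq (count_mem U (rrhs rx)) (count_mem U (rlhs rx))) => Hc.
  by rewrite Hc subrr mulr0 single_shift mul0r.
rewrite (Uchg Hrx Hc (negbT Ha)); apply: IH => //; first lia.
by move=> t; rewrite inE => /eqP ->.
Qed.

Lemma U2 (P : Defs.poly) r : (forall t, t \in P -> t.2 = [:: U]) ->
  pc (iter ell0.+1 D P) (S' :: M) r =
  (\sum_(t <- P) (t.1.1 * SS (Q ell0) M (ra n (L n) :: t.1.2) r))%R.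
Proof.
move=> HP; rewrite pc_iter_sum; apply: eq_big_seq => [[[c rho] x]] Ht.
have Ex : x = [:: U] := HP _ Ht; subst x.
rewrite iter_deriv1 dt_single pc_iter_sum big_map (bigID (fun rx => rlab rx == ra n (L n))) /=.
rewrite [X in (_ + X)%R]big_seq_cond [X in (_ + X)%R]big1 ?addr0; last first.
  move=> rx /andP [Hrx Ha].
  case: (eqVneq (count_mem U (rrhs rx)) (count_mem U (rlhs rx))) => Hc.
    by rewrite Hc subrr mulr0 single_shift mul0r.
  rewrite (Uchg Hrx Hc Ha); apply: U1 => //.
  by move=> t; rewrite inE => /eqP ->.
rewrite big_seq_cond (eq_bigr (fun _ => (c * SS (Q ell0) M (ra n (L n) :: rho) r)%R)).
  by rewrite -big_seq_cond big_const_seq count_ra /= addr0.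
move=> rx /andP [Hrx Ha].
have [El Er] := labU Hrx (eqP Ha); rewrite El Er (eqP Ha) aterm.
by rewrite /= eqxx [(_ - _)%R](_ : _ = 1%R) ?mulr1.
Qed.

Lemma Ps k r : pc (iter k.+1 D [:: ((1%R, [::]), [:: s])]) (S' :: M) r =
  (\sum_(rx <- net | rlab rx == rc n (L n))
      pc (iter k D [:: ((1%R, [:: rc n (L n)]), [:: U])]) (S' :: M) r)%R.
Proof.
rewrite iter_deriv1 dt_single pc_iter_sum big_map (bigID (fun rx => rlab rx == rc n (L n))) /=.
rewrite [X in (_ + X)%R]big_seq_cond [X in (_ + X)%R]big1 ?addr0; last first.
  move=> rx /andP [Hrx Ha].
  case: (eqVneq (count_mem s (rrhs rx)) (count_mem s (rlhs rx))) => Hc.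
    by rewrite Hc subrr mulr0 single_shift mul0r.
  apply: (@Rgen net (has dead) (S' :: M)).
  - move=> z Hz; apply/negP => Hp; case/hasP: Hz => d Hd Dd.
    by move: (@notdeadM d); rewrite -(perm_mem Hp) Hd Dd => /(_ isT).
  - move=> x i rx' H1 Hi Hrx' Hc'; exact: dead_step.
  - move=> t; rewrite inE => /eqP -> /=; right; exact: schg.
rewrite big_seq_cond [RHS]big_seq_cond; apply: eq_bigr => rx /andP [Hrx Ha].
have [El Er] := labs Hrx (eqP Ha); rewrite El Er (eqP Ha).
have E1 : count_mem s [:: X; s] = 1%N by rewrite /= Xns eqxx.
have E2 : count_mem s [:: U] = 0%N by [].
by rewrite E1 E2 subr0 mul1r.
Qed.

Lemma rcoef_rmul u (p : rpoly) r : rcoef (rmul_mon u p) (u ++ r) = rcoef p r.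
Proof. by rewrite /rcoef /rmul_mon big_map; apply: eq_bigl => t /=; rewrite perm_cat2l. Qed.

Lemma final :
  [/\ appears (iter_deriv net (ell0 + 2) s) (S' :: M),
      (forall ell, 1 <= ell < ell0 + 2 -> ~ appears (iter_deriv net ell s) (S' :: M)) &
      rpoly_eq (coef_of (iter_deriv net (ell0 + 2) s) (S' :: M))
               (rmul_mon [:: rc n (L n); ra n (L n)] (coef_of (iter_deriv net ell0 X) M))].
Proof.
have key : rpoly_eq (coef_of (iter_deriv net (ell0 + 2) s) (S' :: M))
               (rmul_mon [:: rc n (L n); ra n (L n)] (coef_of (iter_deriv net ell0 X) M)).
  move=> r; rewrite rcoef_coef addn2 /iter_deriv Ps.
  have h := @U2 [:: ((1%R, [:: rc n (L n)]), [:: U])] r.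
  rewrite h; last by move=> t; rewrite inE => /eqP ->.
  rewrite big_const_seq count_rc /= big_cons big_nil !addr0 mul1r.
  rewrite /rcoef /rmul_mon /coef_of !big_map big_filter_cond /SS; apply: eq_bigl => t /=.
  congr andb.
  have H : perm_eq (t.1.2 ++ [:: ra n (L n); rc n (L n)]) ([:: rc n (L n); ra n (L n)] ++ t.1.2).
    rewrite perm_catC perm_cat2r; apply/permP => p /=; lia.
  by rewrite (permPl H).
split => //.
- case: happ => r0 H0; exists ([:: rc n (L n); ra n (L n)] ++ r0).
  by rewrite key rcoef_rmul.
move=> ell /andP [h1 h2] [r]; rewrite rcoef_coef; case: ell h1 h2 => // k _ h2.
rewrite /iter_deriv Ps big1 ?eqxx // => rx _; apply: U1; first lia.
by move=> t; rewrite inE => /eqP ->.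
Qed.
End WithM.
End Casc.

Unset Implicit Arguments.
Set Strict Implicit.

Theorem mainTheorem17 (N : nat) (L : nat -> nat)
  (hN : 1 <= N) (hL : forall m, 1 <= m <= N -> 1 <= L m)
  (n : nat) (hn : 2 <= n <= N)
  (M : seq species) (ell0 : nat) (hell0 : 1 <= ell0)
  (happ : appears (iter_deriv (cascade N L) ell0 (Ssp n.-1 (L n.-1))) M)
  (hfirst : forall ell, 1 <= ell < ell0 ->
     ~ appears (iter_deriv (cascade N L) ell (Ssp n.-1 (L n.-1))) M)
  (hspec : forall Z, Z \in M ->
     (exists k, [/\ 1 <= k <= n.-1 &
        (exists2 j, j <= L k & Z = Ssp k j) \/ Z = Fsp k]) \/ Z = Esp)
  (hsqfree : uniq M)
  (hdisj : ~ (exists A B C D, [/\ [/\ A \in M, B \in M, C \in M & D \in M],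
              uniq [:: A; B; C; D],
              reacts (cascade N L) A B & reacts (cascade N L) C D]))
  (hdiv : Ssp n.-1 (L n.-1) \in M ->
     forall Z1 Z2, Z1 \in M -> Z2 \in M -> reacts (cascade N L) Z1 Z2 ->
       Z1 = Ssp n.-1 (L n.-1) \/ Z2 = Ssp n.-1 (L n.-1)) :
  let Mhat := Ssp n (L n).-1 :: M in
  [/\ appears (iter_deriv (cascade N L) (ell0 + 2) (Ssp n (L n))) Mhat,
      (forall ell, 1 <= ell < ell0 + 2 ->
         ~ appears (iter_deriv (cascade N L) ell (Ssp n (L n))) Mhat) &
      rpoly_eq (coef_of (iter_deriv (cascade N L) (ell0 + 2) (Ssp n (L n))) Mhat)
               (rmul_mon [:: rc n (L n); ra n (L n)]
                  (coef_of (iter_deriv (cascade N L) ell0 (Ssp n.-1 (L n.-1))) M))].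
Proof.
move=> Mhat.
have hL' : forall m, 1 <= m <= N -> 1 <= L m by [].
exact: (final hL hn hell0 happ hfirst hspec hsqfree hdisj hdiv).
Qed.
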